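(* Let $U=\sum_{j=0}^3 c_j\sigma_j\otimes\sigma_j$ be a normalized two-qubit unitary (see context). For $\alpha,\beta\in[0,\pi/2]$, $\theta\in[0,2\pi)$, $\mu\in(0,\pi/2]$ let $$|\psi(\alpha;\theta,\mu)\rangle=\cos\alpha|0,0\rangle+\sin\alpha|1\rangle(e^{i\theta}\cos\mu|0\rangle+\sin\mu|1\rangle)\in\mathcal H_A\otimes\mathcal H_{R_A},$$ $$|\phi(\beta)\rangle=\cos\beta|0,0\rangle+\sin\beta|1,1\rangle\in\mathcal H_B\otimes\mathcal H_{R_B},$$ with $R_A,R_B$ qubits. Suppose that the maximum defining $K_E(U)$ is attained at an input state of the form $|\psi(\alpha;\theta,\mu)\rangle_{AR_A}\otimes|\phi(\beta)\rangle_{BR_B}$ for some parameters. Then the maximum is also attained at an input of the form $(\cos\alpha|00\rangle+\sin\alpha|11\rangle)_{AR_A}\otimes(\cos\beta|00\rangle+\sin\beta|11\rangle)_{BR_B}$, i.e. $K_E(U)=\max_{\alpha,\beta\in[0,\pi/2]}E(\varphi(\alpha,\beta;\tfrac{\pi}{2},\tfrac{\pi}{2}))$.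
   Context: Pauli matrices: $\sigma_0=I$, $\sigma_1=\begin{pmatrix}0&1\\1&0\end{pmatrix}$, $\sigma_2=\begin{pmatrix}0&-i\\i&0\end{pmatrix}$, $\sigma_3=\begin{pmatrix}1&0\\0&-1\end{pmatrix}$. For real $x,y,z$ set $c_0=\cos x\cos y\cos z+i\sin x\sin y\sin z$, $c_1=\cos x\sin y\sin z+i\sin x\cos y\cos z$, $c_2=\sin x\cos y\sin z+i\cos x\sin y\cos z$, $c_3=\sin x\sin y\cos z+i\cos x\cos y\sin z$, and $U=\sum_{j=0}^3c_j\sigma_j\otimes\sigma_j$ acting on qubits $A,B$. $U$ is called normalized if $\pi/4\ge x\ge y\ge z\ge0$ and $0<y<\pi/4$. For a bipartite unitary $U$ on $\mathcal H_A\otimes\mathcal H_B$, the entangling power is $K_E(U)=\max E\big(U(|\phi\rangle_{AR_A}\otimes|\psi\rangle_{BR_B})\big)$, the maximum over pure states on $AR_A$ and $BR_B$ with arbitrary finite-dimensional ancillas $R_A,R_B$ ($U$ acting on $A,B$), where for a pure state $|\chi\rangle$ on $AR_A\otimes BR_B$, $E(|\chi\rangle)=S(\mathrm{Tr}_{AR_A}|\chi\rangle\langle\chi|)$ is the von Neumann entropy with base-2 logarithm (in ebits). $E(\varphi(\alpha,\beta;\frac{\pi}{2},\frac{\pi}{2}))$ denotes $E$ of $U\big((\cos\alpha|00\rangle+\sin\alpha|11\rangle)_{AR_A}\otimes(\cos\beta|00\rangle+\sin\beta|11\rangle)_{BR_B}\big)$ with $R_A,R_B$ qubits. *)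

(* Defs.v *)
From HB Require Import structures.
From mathcomp Require Import all_boot all_order all_algebra.
From mathcomp Require Import complex.
From mathcomp Require Import all_classical all_reals all_analysis.

Set Implicit Arguments.
Unset Strict Implicit.
Unset Printing Implicit Defensive.

Import Order.TTheory GRing.Theory Num.Theory.
Local Open Scope ring_scope.

Section Defs.
Variable R : realType.
Local Notation C := (R[i]).

Definition cR (r : R) : C := Complex r 0.

Definition pauli (j : 'I_4) : 'M[C]_2 :=
  match val j with
  | 0 => \matrix_(i, k) (if i == k then 1 else 0)
  | 1 => \matrix_(i, k) (if i == k then 0 else 1)
  | 2 => \matrix_(i, k)
           (if i == k then 0 else if val i == 0%N then - Complex 0 1 else Complex 0 1)
  | _ => \matrix_(i, k) (if i == k then (if val i == 0%N then 1 else -1) else 0)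
  end.

Definition coefc (x y z : R) (j : 'I_4) : C :=
  match val j with
  | 0 => Complex (cos x * cos y * cos z) (sin x * sin y * sin z)
  | 1 => Complex (cos x * sin y * sin z) (sin x * cos y * cos z)
  | 2 => Complex (sin x * cos y * sin z) (cos x * sin y * cos z)
  | _ => Complex (sin x * sin y * cos z) (cos x * cos y * sin z)
  end.

(* matrix element <a' b'| U |a b> of U = sum_j c_j sigma_j (x) sigma_j,
   first tensor factor acting on qubit A, second on qubit B *)
Definition Uel (x y z : R) (a' b' a b : 'I_2) : C :=
  \sum_(j < 4) coefc x y z j * pauli j a' a * pauli j b' b.

Definition normalized (x y z : R) : Prop :=
  pi / 4 >= x /\ x >= y /\ y >= z /\ z >= 0 /\ 0 < y /\ y < pi / 4.

(* A pure state on A (x) R_A (qubit A, ancilla of dimension m.+1) is given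
   by its coefficient matrix psi : 'M_(2, m.+1),
   |psi> = sum_{a,r} psi a r |a>|r>. *)
Definition unit_state (p q : nat) (psi : 'M[C]_(p, q)) : Prop :=
  \sum_(a < p) \sum_(r < q) `|psi a r| ^+ 2 = 1.

(* output U_{AB} (|psi>_{A R_A} (x) |phi>_{B R_B}), coefficient on
   |a r>_{A R_A} |b s>_{B R_B} *)
Definition out_state (x y z : R) (m n : nat)
    (psi : 'M[C]_(2, m)) (phi : 'M[C]_(2, n))
    (a : 'I_2) (r : 'I_m) (b : 'I_2) (s : 'I_n) : C :=
  \sum_(a0 < 2) \sum_(b0 < 2) Uel x y z a b a0 b0 * psi a0 r * phi b0 s.

(* reduced density matrix Tr_{A R_A} |chi><chi| on B (x) R_B; the basis
   vector |b s> of B (x) R_B has index b * n.+1 + s in 'I_(2 * n.+1). *)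
Definition idxB (n : nat) (k : 'I_(2 * n.+1)) : 'I_2 := inord (k %/ n.+1).
Definition idxRB (n : nat) (k : 'I_(2 * n.+1)) : 'I_n.+1 := inord (k %% n.+1).

Definition reduced_B (x y z : R) (m n : nat)
    (psi : 'M[C]_(2, m.+1)) (phi : 'M[C]_(2, n.+1)) : 'M[C]_(2 * n.+1) :=
  \matrix_(k, l)
    \sum_(a < 2) \sum_(r < m.+1)
      out_state x y z psi phi a r (idxB k) (idxRB k) *
      (out_state x y z psi phi a r (idxB l) (idxRB l))^*.

Definition spectrum (k : nat) (M : 'M[C]_k) : seq C :=
  sval (closed_field_poly_normal (char_poly M)).

Definition xlog2x (t : R) : R := if t == 0 then 0 else t * (ln t / ln 2).

Definition vN_entropy (k : nat) (rho : 'M[C]_k) : R :=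
  - \sum_(l <- spectrum rho) xlog2x (complex.Re l).

Definition Eout (x y z : R) (m n : nat)
    (psi : 'M[C]_(2, m.+1)) (phi : 'M[C]_(2, n.+1)) : R :=
  vN_entropy (reduced_B x y z psi phi).

Definition KE_attained_at (x y z : R) (m n : nat)
    (psi : 'M[C]_(2, m.+1)) (phi : 'M[C]_(2, n.+1)) : Prop :=
  forall (m' n' : nat) (psi' : 'M[C]_(2, m'.+1)) (phi' : 'M[C]_(2, n'.+1)),
    unit_state psi' -> unit_state phi' ->
    Eout x y z psi' phi' <= Eout x y z psi phi.

Definition psi_state (alpha theta mu : R) : 'M[C]_(2, 2) :=
  \matrix_(a, r)
    if val a == 0%N then (if val r == 0%N then cR (cos alpha) else 0)
    else (if val r == 0%N
          then Complex (cos theta) (sin theta) * cR (sin alpha * cos mu)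
          else cR (sin alpha * sin mu)).

Definition phi_state (beta : R) : 'M[C]_(2, 2) :=
  \matrix_(b, s)
    if b == s then (if val b == 0%N then cR (cos beta) else cR (sin beta))
    else 0.

End Defs.

(* Main.v *)
Require Import Defs.
Set Warnings "-notation-overridden,-parsing".

From HB Require Import structures.
From mathcomp Require Import all_boot all_order all_algebra.
From mathcomp Require Import complex.
From mathcomp Require Import all_classical all_reals all_analysis.
From mathcomp Require Import ring lra.
Set Implicit Arguments.
Unset Strict Implicit.
Unset Printing Implicit Defensive.
Import Order.TTheory GRing.Theory Num.Theory.
Local Open Scope ring_scope.

Lemma Uel_odd (R : realType) (x y z : R) (a' b' a b : 'I_2) :
  odd (a' + b' + a + b) -> Uel x y z a' b' a b = 0.
Proof.
move=> h; rewrite /Uel; apply: big1 => j _.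
case: j => [[|[|[|[|j]]]] Hj] //;
case: a' h => [[|[|?]] ?] //; case: b' => [[|[|?]] ?] //;
case: a => [[|[|?]] ?] //; case: b => [[|[|?]] ?] //= _;
rewrite /pauli /= !mxE /= ?mulr0 ?mul0r //.
Qed.


Definition par (a b s : 'I_2) : 'I_2 := if odd (a + b + s) then ord_max else ord0.

Lemma par_spec (a b s a0 : 'I_2) : a0 != par a b s -> odd (a + b + a0 + s).
Proof.
by case: a => [[|[|?]] ?] //; case: b => [[|[|?]] ?] //;
   case: s => [[|[|?]] ?] //; case: a0 => [[|[|?]] ?].
Qed.

Lemma par_blk (a b s b' s' : 'I_2) : odd (b + s) = odd (b' + s') -> par a b s = par a b' s'.
Proof. by rewrite /par -!addnA !oddD => ->. Qed.

Lemma par_blk_ne (a b s b' s' : 'I_2) : odd (b + s) != odd (b' + s') -> par a b s != par a b' s'.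
Proof.
rewrite /par -!addnA !oddD.
by case: (odd a); case: (odd b); case: (odd s); case: (odd b'); case: (odd s').
Qed.

Lemma phi_off (R : realType) (beta : R) (b s : 'I_2) : b != s -> phi_state beta b s = 0.
Proof. by rewrite mxE => /negbTE ->. Qed.

Lemma out_phi (R : realType) (x y z beta : R) m (psi : 'M[R[i]]_(2, m))
    (a : 'I_2) (r : 'I_m) (b s : 'I_2) :
  out_state x y z psi (phi_state beta) a r b s =
  Uel x y z a b (par a b s) s * psi (par a b s) r * phi_state beta s s.
Proof.
rewrite /out_state (bigD1 (par a b s)) //= [X in _ + X]big1 ?addr0; last first.
  move=> a0 Ha0; apply: big1 => b0 _.
  case: (eqVneq b0 s) => [->|bs].
    by rewrite Uel_odd ?mul0r // par_spec.
  by rewrite phi_off // mulr0.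
rewrite (bigD1 s) //= [X in _ + X]big1 ?addr0 // => b0 bs.
by rewrite phi_off // mulr0.
Qed.

Definition rho (R : realType) m (psi : 'M[R[i]]_(2, m)) (p q : 'I_2) : R[i] :=
  \sum_(r < m) psi p r * (psi q r)^*.

Lemma red_phi (R : realType) (x y z beta : R) m (psi : 'M[R[i]]_(2, m.+1)) (k l : 'I_(2 * 2)) :
  reduced_B x y z psi (phi_state beta) k l =
  \sum_(a < 2) (Uel x y z a (idxB k) (par a (idxB k) (idxRB k)) (idxRB k)
                 * phi_state beta (idxRB k) (idxRB k) *
                (Uel x y z a (idxB l) (par a (idxB l) (idxRB l)) (idxRB l)
                 * phi_state beta (idxRB l) (idxRB l))^*) *
               rho psi (par a (idxB k) (idxRB k)) (par a (idxB l) (idxRB l)).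
Proof.
rewrite /reduced_B mxE; apply: eq_bigr => a _; rewrite /rho mulr_sumr.
apply: eq_bigr => r _; rewrite !out_phi !rmorphM /=; ring.
Qed.

Lemma rho_off (R : realType) (alpha : R) (p q : 'I_2) : p != q -> rho (phi_state alpha) p q = 0.
Proof.
move=> pq; rewrite /rho; apply: big1 => r _.
case: (eqVneq p r) => [<-|pr].
  by rewrite (@phi_off _ _ q p) ?rmorph0 ?mulr0 // eq_sym.
by rewrite phi_off // mul0r.
Qed.

Lemma rho_diag (R : realType) (alpha theta mu : R) (p : 'I_2) :
  rho (psi_state alpha theta mu) p p = rho (phi_state alpha) p p.
Proof.
rewrite /rho !big_ord_recl !big_ord0 !addr0.
case: p => [[|[|?]] ?] //; rewrite !mxE /=.
  by [].
have h1 := cos2Dsin2 theta; have h2 := cos2Dsin2 mu.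
apply/eqP; rewrite eq_complex /=; apply/andP; split; apply/eqP.
  set ct := cos theta in h1 *; set st := sin theta in h1 *.
  set cm := cos mu in h2 *; set sm := sin mu in h2 *.
  set sa := sin alpha; set ca := cos alpha.
  apply/eqP; rewrite -subr_eq0; apply/eqP.
  transitivity (sa ^+ 2 * cm ^+ 2 * (ct ^+ 2 + st ^+ 2 - 1) + sa ^+ 2 * (cm ^+ 2 + sm ^+ 2 - 1)).
    by ring.
  by rewrite h1 h2 !subrr !mulr0 addr0.
ring.
Qed.

From mathcomp Require Import spectral sesquilinear.
Local Open Scope ring_scope.
Lemma ln2_gt0 (R : realType) : 0 < ln (2 : R).
Proof. by apply: ln_gt0; rewrite ltr1n. Qed.

Lemma ln_le_sub1 (R : realType) (u : R) : 0 < u -> ln u <= u - 1.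
Proof.
move=> u0; have := expR_ge1Dx (ln u); rewrite lnK ?posrE // => h; lra.
Qed.

Lemma xlog2x_tangent (R : realType) (s t : R) : 0 < s -> 0 <= t ->
  xlog2x s + (ln s + 1) / ln 2 * (t - s) <= xlog2x t.
Proof.
move=> s0 t0; have l2 := ln2_gt0 R.
rewrite /xlog2x (gt_eqF s0).
have key : s * ln s + (ln s + 1) * (t - s) <= (if t == 0 then 0 else t * ln t).
  case: eqP => [->|/eqP tn0].
    lra.
  have tp : 0 < t by rewrite lt_def tn0.
  have := ln_le_sub1 (divr_gt0 s0 tp); rewrite ln_div ?posrE // => h.
  have h2 : t * (ln s - ln t) <= t * (s / t - 1) by rewrite ler_pM2l.
  rewrite mulrBr mulrDr (mulrC t (s / t)) divfK ?mulr1 in h2 => //.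
  nra.
have E : s * (ln s / ln 2) + (ln s + 1) / ln 2 * (t - s) = (s * ln s + (ln s + 1) * (t - s)) / ln 2.
  by field; rewrite gt_eqF.
have -> : (if t == 0 then 0 else t * (ln t / ln 2)) = (if t == 0 then 0 else t * ln t) / ln 2.
  by case: eqP => _; rewrite ?mul0r ?mulrA.
by rewrite E ler_pM2r ?invr_gt0.
Qed.

Lemma xlog2x0 (R : realType) : xlog2x (0 : R) = 0.
Proof. by rewrite /xlog2x eqxx. Qed.

Lemma xlog2x_jensen (R : realType) (I : finType) (w t : I -> R) :
  (forall i, 0 <= w i) -> (forall i, 0 <= t i) -> \sum_i w i = 1 ->
  xlog2x (\sum_i w i * t i) <= \sum_i w i * xlog2x (t i).
Proof.
move=> w0 t0 w1.
have s0 : 0 <= \sum_i w i * t i by apply: sumr_ge0 => i _; rewrite mulr_ge0.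
case: (eqVneq (\sum_i w i * t i) 0) => [se|sn].
  have := se; move/psumr_eq0P => h.
  rewrite se xlog2x0 big1 // => i _.
  have := h (fun j _ => mulr_ge0 (w0 j) (t0 j)) i isT; move/eqP; rewrite mulf_eq0.
  by case/orP => /eqP ->; rewrite ?mul0r ?xlog2x0 ?mulr0.
have sp : 0 < \sum_i w i * t i by rewrite lt_def sn.
set s := \sum_i w i * t i in s0 sn sp *.
set c := (ln s + 1) / ln 2.
apply: (@le_trans _ _ (\sum_i w i * (xlog2x s + c * (t i - s)))).
  rewrite (eq_bigr (fun i => xlog2x s * w i + c * (w i * t i) - c * s * w i)); last first.
    by move=> i _; ring.
  rewrite sumrB big_split /= -!mulr_sumr w1 -/s; lra.
by apply: ler_sum => i _; apply: ler_wpM2l => //; apply: xlog2x_tangent.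
Qed.



Lemma char_poly_conj (C : fieldType) n (V A : 'M[C]_n) :
  V \in unitmx -> char_poly (invmx V *m A *m V) = char_poly A.
Proof.
move=> Vu; rewrite /char_poly /char_poly_mx.
have -> : 'X%:M - map_mx polyC (invmx V *m A *m V) =
    map_mx polyC (invmx V) *m ('X%:M - map_mx polyC A) *m map_mx polyC V.
  have XV : map_mx polyC (invmx V) *m 'X%:M *m map_mx polyC V = 'X%:M.
    by rewrite scalar_mxC -mulmxA -map_mxM mulVmx // map_mx1 mulmx1.
  by rewrite mulmxBr mulmxBl XV -!map_mxM.
rewrite det_mulmx det_mulmx !det_map_mx mulrAC -rmorphM /= -det_mulmx mulVmx //.
by rewrite det1 mul1r.
Qed.

Lemma spectrum_normal (R : realType) n (M : 'M[R[i]]_n) :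
  M \is normalmx ->
  perm_eq (spectrum M) [seq spectral_diag M 0 j | j <- index_enum 'I_n].
Proof.
move=> /orthomx_spectralP Me.
have cp : char_poly M = \prod_(j < n) ('X - (spectral_diag M 0 j)%:P).
  rewrite {1}Me char_poly_conj ?spectral_unit // char_poly_trig ?diag_mx_is_trig //.
  by apply: eq_bigr => j _; rewrite mxE eqxx mulr1n.
rewrite /spectrum; case: closed_field_poly_normal => r /= hr.
apply: prod_XsubC_eq; rewrite big_map -cp.
by move: hr; rewrite (monicP (char_poly_monic M)) scale1r => <-.
Qed.

Lemma vN_entropy_normal (R : realType) n (M : 'M[R[i]]_n) :
  M \is normalmx ->
  vN_entropy M = - \sum_(j < n) xlog2x (complex.Re (spectral_diag M 0 j)).
Proof.
move=> Mn; rewrite /vN_entropy (perm_big _ (spectrum_normal Mn)) big_map.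
by [].
Qed.

Local Open Scope sesquilinear_scope.

Definition psdmx (R : realType) n (M : 'M[R[i]]_n) :=
  forall v : 'rV_n, 0 <= (v *m M *m v ^t*) 0 0.

Lemma herm_normal (R : realType) n (M : 'M[R[i]]_n) : M ^t* = M -> M \is normalmx.
Proof. by move=> h; apply/normalmxP; rewrite h. Qed.

Lemma Re_mulJ (R : realType) (x d : R[i]) :
  complex.Re (x * d * x^*) = complex.Re (x * x^*) * complex.Re d.
Proof. by case: x => a b; case: d => c e /=; ring. Qed.

Lemma Re_mulJ_ge0 (R : realType) (x : R[i]) : 0 <= complex.Re (x * x^*).
Proof. by case: x => a b /=; nra. Qed.

Lemma conj_diag_row (R : realType) n (M U : 'M[R[i]]_n) i :
  (U *m M *m U ^t*) i i = (row i U *m M *m (row i U) ^t*) 0 0.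
Proof.
rewrite !mxE; apply: eq_bigr => l _; rewrite !mxE; congr (_ * _).
by apply: eq_bigr => k _; rewrite !mxE.
Qed.

Lemma psd_diag (R : realType) n (M U : 'M[R[i]]_n) i :
  psdmx M -> 0 <= complex.Re ((U *m M *m U ^t*) i i).
Proof.
move=> /(_ (row i U)); rewrite -conj_diag_row.
by case: ((U *m M *m U ^t*) i i) => a b; rewrite lecE /= => /andP[].
Qed.

Lemma trmxC_mul (R : realType) m n p (A : 'M[R[i]]_(m, n)) (B : 'M[R[i]]_(n, p)) :
  (A *m B) ^t* = B ^t* *m A ^t*.
Proof. by rewrite trmx_mul map_mxM. Qed.




Lemma spectral_facts (R : realType) n (M : 'M[R[i]]_n) :
  M \is normalmx ->
  let V := spectralmx M in let d := spectral_diag M in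
  [/\ V \is unitarymx, M = V ^t* *m diag_mx d *m V &
      V *m M *m V ^t* = diag_mx d].
Proof.
move=> /orthomx_spectralP Me V d.
have Vu : V \is unitarymx by apply: spectral_unitarymx.
have VV : V *m V ^t* = 1%:M by apply/unitarymxP.
have Me' : M = V ^t* *m diag_mx d *m V by rewrite -invmx_unitary.
split => //; rewrite {1}Me' !mulmxA VV mul1mx -mulmxA VV mulmx1 //.
Qed.

Lemma diag_conj_expand (R : realType) n (M U : 'M[R[i]]_n) i :
  M \is normalmx ->
  let X := U *m (spectralmx M) ^t* in
  (U *m M *m U ^t*) i i =
  \sum_j X i j * spectral_diag M 0 j * (X i j)^*.
Proof.
move=> Mn X; have [Vu Me _] := spectral_facts Mn.
have -> : U *m M *m U ^t* = X *m diag_mx (spectral_diag M) *m X ^t*.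
  rewrite /X {1}Me trmxC_mul trmxCK !mulmxA //.
rewrite mul_mx_diag !mxE; apply: eq_bigr => j _; rewrite !mxE //.
Qed.

Lemma Re_sum (R : realType) (I : Type) (r : seq I) (P : pred I) (F : I -> R[i]) :
  complex.Re (\sum_(j <- r | P j) F j) = \sum_(j <- r | P j) complex.Re (F j).
Proof. by apply: (big_morph (@complex.Re R)) => // [[a b] [c d]]. Qed.

Lemma diag_jensen (R : realType) n (M U : 'M[R[i]]_n) :
  M \is normalmx -> psdmx M -> U \is unitarymx ->
  \sum_i xlog2x (complex.Re ((U *m M *m U ^t*) i i)) <=
  \sum_j xlog2x (complex.Re (spectral_diag M 0 j)).
Proof.
move=> Mn Mp Uu.
have [Vu Me VMV] := spectral_facts Mn.
set X := U *m (spectralmx M) ^t*.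
have Xu : X \is unitarymx by rewrite /X mul_unitarymx // trmxC_unitary.
have Xtu : X ^t* \is unitarymx by rewrite trmxC_unitary.
set w := fun i j => complex.Re (X i j * (X i j)^*).
set t := fun j => complex.Re (spectral_diag M 0 j).
have t0 : forall j, 0 <= t j.
  move=> j; rewrite /t; have := @psd_diag R n M (spectralmx M) j Mp.
  by rewrite VMV mxE eqxx mulr1n.
have w0 : forall i j, 0 <= w i j by move=> i j; apply: Re_mulJ_ge0.
have wr : forall i, \sum_j w i j = 1.
  move=> i; have /unitarymxP/matrixP/(_ i i) := Xu.
  rewrite !mxE eqxx mulr1n => h.
  rewrite /w /= -Re_sum.
  by rewrite -[X in _ = X]/(complex.Re 1) -h; congr complex.Re; apply: eq_bigr => j _; rewrite !mxE.
have wc : forall j, \sum_i w i j = 1.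
  move=> j; have /unitarymxP/matrixP/(_ j j) := Xtu.
  rewrite trmxCK !mxE eqxx mulr1n => h.
  rewrite /w /= -Re_sum.
  rewrite -[X in _ = X]/(complex.Re 1) -h; congr complex.Re; apply: eq_bigr => i _.
  by rewrite !mxE mulrC.
have e : forall i, complex.Re ((U *m M *m U ^t*) i i) = \sum_j w i j * t j.
  move=> i; rewrite diag_conj_expand // -/X.
  rewrite Re_sum; apply: eq_bigr => j _.
  by rewrite Re_mulJ.
apply: (@le_trans _ _ (\sum_i \sum_j w i j * xlog2x (t j))).
  by apply: ler_sum => i _; rewrite e; apply: xlog2x_jensen.
rewrite exchange_big /=; apply: ler_sum => j _.
by rewrite -mulr_suml wc mul1r.
Qed.

Lemma xlog2x_mid (R : realType) (a b : R) : 0 <= a -> 0 <= b ->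
  xlog2x ((a + b) / 2) <= (xlog2x a + xlog2x b) / 2.
Proof.
move=> a0 b0; case: (eqVneq (a + b) 0) => [ab|ab].
  have a_0 : a = 0 by lra.
  have b_0 : b = 0 by lra.
  by rewrite a_0 b_0 addr0 mul0r xlog2x0 addr0 mul0r.
have sp : 0 < (a + b) / 2 by rewrite divr_gt0 // lt_def ab addr_ge0.
have h1 := xlog2x_tangent sp a0.
have h2 := xlog2x_tangent sp b0.
set c := (ln ((a + b) / 2) + 1) / ln 2 in h1 h2.
set g := xlog2x ((a + b) / 2) in h1 h2 *.
have : g + c * (a - (a + b) / 2) + (g + c * (b - (a + b) / 2)) = 2 * g by field.
lra.
Qed.

Definition signmx (R : realType) n (blk : 'I_n -> bool) : 'M[R[i]]_n :=
  diag_mx (\row_k (if blk k then -1 else 1)).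

Lemma signmx_herm (R : realType) n (blk : 'I_n -> bool) :
  (signmx R blk) ^t* = signmx R blk.
Proof.
apply/matrixP => i j; rewrite !mxE eq_sym.
case: eqP => [->|_]; rewrite ?mulr0n ?mulr1n ?conjC0 //.
by case: (blk j) => /=; rewrite ?rmorphN ?rmorph1.
Qed.

Lemma signmx_unitary (R : realType) n (blk : 'I_n -> bool) :
  signmx R blk \is unitarymx.
Proof.
apply/unitarymxP; rewrite signmx_herm /signmx mul_diag_mx.
apply/matrixP => i j; rewrite !mxE.
case: eqP => [->|_]; rewrite ?mulr0n ?mulr1n ?mulr0 //.
by case: (blk j); rewrite ?mulrNN mulr1.
Qed.

Lemma pinch_eq (R : realType) n (P : 'M[R[i]]_n) (blk : 'I_n -> bool) :
  (\matrix_(k, l) if blk k == blk l then P k l else 0) =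
  2^-1 *: (P + signmx R blk *m P *m (signmx R blk) ^t*).
Proof.
rewrite signmx_herm /signmx mul_diag_mx mul_mx_diag.
apply/matrixP => k l; rewrite !mxE.
have h2 : (2 : R[i]) != 0 by rewrite pnatr_eq0.
case: (blk k); case: (blk l) => /=; rewrite ?mulN1r ?mulrN1 ?opprK ?mul1r ?mulr1 ?subrr ?mulr0 //;
  by apply: (mulfI h2); rewrite mulrA mulfV // mul1r mulr_natl mulr2n.
Qed.


Lemma mxD_entry (R : realType) m n (A B : 'M[R[i]]_(m, n)) i j :
  (A + B) i j = A i j + B i j.
Proof. by rewrite mxE. Qed.

Lemma Re_add (R : realType) (u v : R[i]) : complex.Re (u + v) = complex.Re u + complex.Re v.
Proof. by case: u; case: v. Qed.

Lemma pinch_eq2 (R : realType) n (P : 'M[R[i]]_n) (blk : 'I_n -> bool) :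
  (\matrix_(k, l) if blk k == blk l then P k l else 0) +
  (\matrix_(k, l) if blk k == blk l then P k l else 0) =
  P + signmx R blk *m P *m (signmx R blk) ^t*.
Proof.
rewrite signmx_herm /signmx mul_diag_mx mul_mx_diag.
apply/matrixP => k l; rewrite !mxE.
case: (blk k); case: (blk l) => /=;
  by rewrite ?mulN1r ?mulrN1 ?opprK ?mul1r ?mulr1 ?subrr ?addr0.
Qed.

Lemma pinch_entropy (R : realType) n (P : 'M[R[i]]_n) (blk : 'I_n -> bool) :
  P ^t* = P -> psdmx P ->
  vN_entropy P <= vN_entropy (\matrix_(k, l) if blk k == blk l then P k l else 0).
Proof.
move=> Ph Pp.
have QQ := pinch_eq2 P blk.
set Q := \matrix_(k, l) _ in QQ *.
have Qh : Q ^t* = Q.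
  apply/matrixP => k l; rewrite !mxE eq_sym.
  case: eqP => _; rewrite ?conjC0 //.
  by move/matrixP: Ph => /(_ k l); rewrite !mxE.
have Qn := herm_normal Qh.
have Pn := herm_normal Ph.
rewrite (vN_entropy_normal Qn) (vN_entropy_normal Pn) lerN2.
set W := signmx R blk in QQ.
set V := spectralmx Q.
have [Vu _ VQV] := spectral_facts Qn.
have VWu : V *m W \is unitarymx by rewrite mul_unitarymx // signmx_unitary.
have J1 := diag_jensen Pn Pp Vu.
have J2 := diag_jensen Pn Pp VWu.
set D := \sum_j xlog2x (complex.Re (spectral_diag P 0 j)) in J1 J2 *.
have e : forall j, complex.Re (spectral_diag Q 0 j) =
    (complex.Re ((V *m P *m V ^t*) j j) + complex.Re ((V *m W *m P *m (V *m W) ^t*) j j)) / 2.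
  move=> j.
  have h := congr1 (fun M => (V *m M *m V ^t*) j j) QQ.
  move: h; rewrite /= !mulmxDr !mulmxDl !mxD_entry VQV.
  have -> : V *m (W *m P *m W ^t*) *m V ^t* = V *m W *m P *m (V *m W) ^t*.
    by rewrite trmxC_mul !mulmxA.
  move/(congr1 (@complex.Re R)); rewrite !Re_add mxE eqxx mulr1n.
  lra.
apply: (@le_trans _ _ (\sum_j (xlog2x (complex.Re ((V *m P *m V ^t*) j j)) +
                               xlog2x (complex.Re ((V *m W *m P *m (V *m W) ^t*) j j))) / 2)).
  apply: ler_sum => j _; rewrite e; apply: xlog2x_mid; exact: psd_diag.
rewrite -mulr_suml big_split /=; lra.
Qed.


Lemma red_herm (R : realType) (x y z : R) m n (psi : 'M[R[i]]_(2, m.+1)) (phi : 'M[R[i]]_(2, n.+1)) :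
  (reduced_B x y z psi phi) ^t* = reduced_B x y z psi phi.
Proof.
apply/matrixP => k l; rewrite !mxE rmorph_sum; apply: eq_bigr => a _.
rewrite rmorph_sum; apply: eq_bigr => r _.
by rewrite /= rmorphM /= conjCK mulrC.
Qed.

Lemma sum4_perm (V : nmodType) (I J K L : finType) (F : L -> K -> I -> J -> V) :
  \sum_l \sum_k \sum_a \sum_r F l k a r = \sum_a \sum_r \sum_k \sum_l F l k a r.
Proof.
rewrite exchange_big /=.
under eq_bigr => k _ do rewrite exchange_big /=.
rewrite exchange_big /=.
under eq_bigr => a _ do under eq_bigr => k _ do rewrite exchange_big /=.
under eq_bigr => a _ do rewrite exchange_big /=.
by [].
Qed.

Lemma red_psd (R : realType) (x y z : R) m n (psi : 'M[R[i]]_(2, m.+1)) (phi : 'M[R[i]]_(2, n.+1)) :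
  psdmx (reduced_B x y z psi phi).
Proof.
move=> v.
pose o := fun a r (k : 'I_(2 * n.+1)) => out_state x y z psi phi a r (idxB k) (idxRB k).
have -> : (v *m reduced_B x y z psi phi *m v ^t*) 0 0 =
    \sum_(a < 2) \sum_(r < m.+1) (\sum_k v 0 k * o a r k) * (\sum_k v 0 k * o a r k)^*.
  transitivity (\sum_l \sum_k \sum_(a < 2) \sum_(r < m.+1)
                  v 0 k * (o a r k * (o a r l)^*) * (v 0 l)^*).
    rewrite !mxE; apply: eq_bigr => l _; rewrite !mxE mulr_suml; apply: eq_bigr => k _.
    rewrite !mxE mulr_sumr mulr_suml; apply: eq_bigr => a _.
    by rewrite mulr_sumr mulr_suml.
  rewrite sum4_perm; apply: eq_bigr => a _; apply: eq_bigr => r _.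
  rewrite rmorph_sum mulr_suml; apply: eq_bigr => k _.
  rewrite mulr_sumr; apply: eq_bigr => l _.
  by rewrite rmorphM; ring.
apply: sumr_ge0 => a _; apply: sumr_ge0 => r _.
exact: mul_conjC_ge0.
Qed.

Lemma red_pinch (R : realType) (x y z alpha theta mu beta : R) :
  reduced_B x y z (phi_state alpha) (phi_state beta) =
  \matrix_(k, l) if odd (idxB k + idxRB k) == odd (idxB l + idxRB l)
                 then reduced_B x y z (psi_state alpha theta mu) (phi_state beta) k l
                 else 0.
Proof.
apply/matrixP => k l; rewrite mxE !red_phi.
case: eqP => h.
  apply: eq_bigr => a _; rewrite -(par_blk a h) rho_diag //.
apply: big1 => a _; rewrite rho_off ?mulr0 //.
by apply: par_blk_ne; apply/eqP.
Qed.

Theorem lemma3 (R : realType) (x y z : R) :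
  normalized x y z ->
  (exists alpha beta theta mu : R,
      [/\ 0 <= alpha <= pi / 2, 0 <= beta <= pi / 2,
          0 <= theta < 2 * pi, 0 < mu <= pi / 2 &
          KE_attained_at x y z (psi_state alpha theta mu) (phi_state beta)]) ->
  exists alpha beta : R,
    [/\ 0 <= alpha <= pi / 2, 0 <= beta <= pi / 2 &
        KE_attained_at x y z (phi_state alpha) (phi_state beta)].
Proof.
move=> _ [alpha [beta [theta [mu [ha hb _ _ hK]]]]].
exists alpha, beta; split => // m' n' psi' phi' u1 u2.
apply: (le_trans (hK m' n' psi' phi' u1 u2)).
rewrite /Eout (red_pinch x y z alpha theta mu beta).
apply: pinch_entropy; [exact: red_herm | exact: red_psd].
Qed.
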